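(* Let $p\ge3$ and let $n_1\ge n_2\ge\dots\ge n_p\ge1$ be positive integers such that $n_1+\sum_{i=2}^p\sigma_in_i=0$ for some $\sigma_2,\dots,\sigma_p\in\{-1,0,1\}$. Then for every $0<\alpha<1$, $$\sum_{i=2}^pn_i^\alpha-n_1^\alpha\ge(2-2^\alpha)\sum_{i=3}^pn_i^\alpha.$$ *)

(* Defs.v *)
From Stdlib Require Export Reals ZArith List Lra Lia.
Open Scope R_scope.

(* Main.v *)
Require Import Defs.
From Stdlib Require Import ZArith.
From Stdlib Require Import Reals Lra.
Open Scope R_scope.
Lemma Rpow_neg_anti x y c : 0 < x <= y -> c <= 0 -> Rpower y c <= Rpower x c.
Proof.
  intros [Hx Hxy] Hc. unfold Rpower.
  assert (ln x <= ln y) by (destruct (Req_dec x y) as [->|]; [lra| left; apply ln_increasing; lra]).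
  assert (c * ln y <= c * ln x) by (apply Rmult_le_compat_neg_l; lra).
  destruct (Req_dec (c*ln y) (c * ln x)) as [E|E]. rewrite E; lra.
  left; apply exp_increasing; lra.
Qed.

Lemma phi_dec a d u v : 0 < a < 1 -> 0 <= d -> 0 < u <= v ->
  Rpower (v + d) a - Rpower v a <= Rpower (u + d) a - Rpower u a.
Proof.
  intros Ha Hd [Hu Huv].
  destruct (Req_dec u v) as [E|E]. subst; lra.
  assert (Hlt : u < v) by lra.
  set (phi := fun x => Rpower (x + d) a - Rpower x a).
  set (phi' := fun x => a * Rpower (x + d) (a - 1) - a * Rpower x (a - 1)).
  destruct (MVT_cor2 phi phi' u v Hlt) as [c [Hc Hcin]].
  - intros c Hc. unfold phi, phi'.
    apply derivable_pt_lim_minus; [|apply derivable_pt_lim_power; lra].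
    replace (a * Rpower (c + d) (a - 1)) with (a * Rpower (c + d) (a - 1) * 1) by ring.
    apply (derivable_pt_lim_comp (fun x => x + d) (fun x => Rpower x a)).
    + replace 1 with (1 + 0) by ring.
      apply derivable_pt_lim_plus; [apply derivable_pt_lim_id | apply derivable_pt_lim_const].
    + apply derivable_pt_lim_power; lra.
  - unfold phi in Hc.
    assert (Rpower (c + d) (a - 1) <= Rpower c (a - 1)) by (apply Rpow_neg_anti; lra).
    assert (phi' c <= 0) by (unfold phi'; nra).
    nra.
Qed.
From Stdlib Require Import List.
Lemma key a b al : 0 < al < 1 -> 0 < b <= a ->
  Rpower (a + b) al <= Rpower a al + (Rpower 2 al - 1) * Rpower b al.
Proof.
  intros Hal Hb.
  pose proof (phi_dec al (a - b) b (2 * b) Hal ltac:(lra) ltac:(lra)) as H.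
  replace (2 * b + (a - b)) with (a + b) in H by ring.
  replace (b + (a - b)) with a in H by ring.
  rewrite <- Rpower_mult_distr in H by lra. nra.
Qed.

Lemma chain (n : nat -> nat) al l : 0 < al < 1 -> forall a, 0 < a ->
  (forall i, In i l -> 0 < INR (n i) <= a) ->
  Rpower (a + fold_right Rplus 0 (map (fun i => INR (n i)) l)) al <=
  Rpower a al + (Rpower 2 al - 1) * fold_right Rplus 0 (map (fun i => Rpower (INR (n i)) al) l).
Proof.
  intros Hal. induction l as [|j l IH]; intros a Ha Hl; simpl.
  - rewrite Rplus_0_r. lra.
  - assert (Hj : 0 < INR (n j) <= a) by (apply Hl; simpl; auto).
    replace (a + (INR (n j) + fold_right Rplus 0 (map (fun i => INR (n i)) l)))
      with ((a + INR (n j)) + fold_right Rplus 0 (map (fun i => INR (n i)) l)) by ring.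
    eapply Rle_trans. apply IH. lra.
    intros i Hi. pose proof (Hl i (or_intror Hi)). lra.
    pose proof (key a (INR (n j)) al Hal Hj). lra.
Qed.
Lemma mono (p : nat) (n : nat -> nat) :
  (forall i, (1 <= i)%nat -> (i < p)%nat -> (n (S i) <= n i)%nat) ->
  forall k i, (1 <= i)%nat -> (i + k <= p)%nat -> (n (i + k) <= n i)%nat.
Proof.
  intros H. induction k; intros i Hi Hk.
  - rewrite Nat.add_0_r; lia.
  - replace (i + S k)%nat with (S (i + k)) by lia.
    specialize (H (i + k)%nat ltac:(lia) ltac:(lia)). specialize (IHk i Hi ltac:(lia)). lia.
Qed.

Lemma zbound (n : nat -> nat) (sigma : nat -> Z) l :
  (forall i, In i l -> sigma i = (-1)%Z \/ sigma i = 0%Z \/ sigma i = 1%Z) ->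
  (- fold_right Z.add 0%Z (map (fun i => sigma i * Z.of_nat (n i)) l) <=
   fold_right Z.add 0%Z (map (fun i => Z.of_nat (n i)) l))%Z.
Proof.
  induction l as [|j l IH]; intros H; simpl. lia.
  assert (Hl : forall i, In i l -> sigma i = (-1)%Z \/ sigma i = 0%Z \/ sigma i = 1%Z)
    by (intros; apply H; simpl; auto).
  specialize (IH Hl).
  destruct (H j (or_introl eq_refl)) as [E|[E|E]]; rewrite E; lia.
Qed.

Lemma sumR (n : nat -> nat) l :
  fold_right Rplus 0 (map (fun i => INR (n i)) l) =
  IZR (fold_right Z.add 0%Z (map (fun i => Z.of_nat (n i)) l)).
Proof.
  induction l as [|j l IH]; simpl. reflexivity.
  rewrite plus_IZR, IH, INR_IZR_INZ. reflexivity.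
Qed.

Theorem lemmaC1 (p : nat) (n : nat -> nat) (alpha : R) :
  (3 <= p)%nat ->
  (forall i, (1 <= i)%nat -> (i < p)%nat -> (n (S i) <= n i)%nat) ->
  (1 <= n p)%nat ->
  (exists sigma : nat -> Z,
      (forall i, (2 <= i)%nat -> (i <= p)%nat ->
         sigma i = (-1)%Z \/ sigma i = 0%Z \/ sigma i = 1%Z) /\
      (Z.of_nat (n 1%nat) +
         fold_right Z.add 0%Z
           (map (fun i => (sigma i * Z.of_nat (n i))%Z) (seq 2 (p - 1))) = 0)%Z) ->
  0 < alpha < 1 ->
  fold_right Rplus 0 (map (fun i => Rpower (INR (n i)) alpha) (seq 2 (p - 1)))
    - Rpower (INR (n 1%nat)) alpha
  >= (2 - Rpower 2 alpha) *
     fold_right Rplus 0 (map (fun i => Rpower (INR (n i)) alpha) (seq 3 (p - 2))).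
Proof.
  intros Hp Hmon Hnp [sigma [Hs Heq]] Hal.
  pose proof (mono p n Hmon) as M.
  assert (Hpos : forall i, (1 <= i)%nat -> (i <= p)%nat -> 0 < INR (n i)).
  { intros i H1 H2. apply lt_0_INR. pose proof (M (p - i)%nat i H1 ltac:(lia)).
    replace (i + (p - i))%nat with p in H by lia. lia. }
  assert (Hz := zbound n sigma (seq 2 (p - 1))).
  assert (Hz' : (Z.of_nat (n 1%nat) <= fold_right Z.add 0%Z (map (fun i => Z.of_nat (n i)) (seq 2 (p - 1))))%Z).
  { assert (HH : forall i, In i (seq 2 (p - 1)) -> sigma i = (-1)%Z \/ sigma i = 0%Z \/ sigma i = 1%Z).
    { intros i Hi. apply in_seq in Hi. apply Hs; lia. }
    specialize (Hz HH). lia. }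
  apply IZR_le in Hz'. rewrite <- sumR, <- INR_IZR_INZ in Hz'.
  replace (p - 1)%nat with (S (p - 2)) in * by lia. simpl in Hz' |- *.
  set (T := fold_right Rplus 0 (map (fun i => INR (n i)) (seq 3 (p - 2)))) in *.
  set (U := fold_right Rplus 0 (map (fun i => Rpower (INR (n i)) alpha) (seq 3 (p - 2)))).
  assert (H2 : 0 < INR (n 2%nat)) by (apply Hpos; lia).
  assert (H1 : 0 < INR (n 1%nat)) by (apply Hpos; lia).
  assert (HT : 0 <= T).
  { unfold T. clear -Hpos. induction (seq 3 (p - 2)); simpl. lra.
    pose proof (pos_INR (n a)). lra. }
  pose proof (chain n alpha (seq 3 (p - 2)) Hal (INR (n 2%nat)) H2) as C.
  assert (Hc : forall i, In i (seq 3 (p - 2)) -> 0 < INR (n i) <= INR (n 2%nat)).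
  { intros i Hi. apply in_seq in Hi. split. apply Hpos; lia.
    apply le_INR. pose proof (M (i - 2)%nat 2%nat ltac:(lia) ltac:(lia)).
    replace (2 + (i - 2))%nat with i in H by lia. exact H. }
  specialize (C Hc). fold T U in C.
  pose proof (Rle_Rpower_l (INR (n 1%nat)) (INR (n 2%nat) + T) alpha ltac:(lra) ltac:(lra)).
  fold U. lra.
Qed.
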